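(* Let $\mathcal F=(F,\rightarrowtail)$ be an argumentation framework with grounded extension $\mathcal G$. If $A\subseteq F$ is weakly complete, then $\mathcal G\subseteq A$.
   Context: An argumentation framework $\mathcal F=(F,\rightarrowtail)$ consists of a (possibly infinite) set $F$ of arguments and an attack relation $\rightarrowtail\subseteq F\times F$. A set $S$ defends an argument $a$ if every attacker of $a$ is attacked by some element of $S$. Grounded extension: $\mathcal G_0=\emptyset$, $\mathcal G_{\alpha+1}=\{a\in F:\mathcal G_\alpha\text{ defends }a\}$, $\mathcal G_\lambda=\bigcup_{\alpha<\lambda}\mathcal G_\alpha$ for limit $\lambda$; the grounded extension $\mathcal G$ is the value at which this ordinal-indexed sequence stabilizes. A weakly complete labeling is a map $L:F\to\{\mathtt{in},\mathtt{out},\mathtt{undec}\}$ such that for every $a\in F$: if $L(a)=\mathtt{in}$ then no attacker of $a$ is labeled $\mathtt{in}$; if $L(a)=\mathtt{out}$ then some attacker of $a$ is labeled $\mathtt{in}$; if $L(a)=\mathtt{undec}$ then some attacker of $a$ is labeled $\mathtt{undec}$ and no attacker of $a$ is labeled $\mathtt{in}$. A set $A$ is weakly complete if $A=\{a:L(a)=\mathtt{in}\}$ for some weakly complete labeling $L$. *)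

(* Defs.v *)
(* An argumentation framework: a type F of arguments and an
   attack relation [att b a] meaning "b attacks a". *)

Inductive label := lin | lout | lundec.

Definition defends {F : Type} (att : F -> F -> Prop) (S : F -> Prop) (a : F) : Prop :=
  forall b, att b a -> exists c, S c /\ att c b.

(* The grounded extension: the union of the transfinite (ordinal-indexed)
   iteration G_0 = empty, G_{α+1} = {a | G_α defends a}, unions at limits.
   This is rendered as the inductive (least) predicate generated by the rule
   "if the (already constructed) grounded arguments defend a, then a is
   grounded"; the stages of the induction are exactly the ordinal stages. *)
Inductive grounded {F : Type} (att : F -> F -> Prop) : F -> Prop :=
  | grounded_step : forall a,
      (forall b, att b a -> exists c, grounded att c /\ att c b) ->
      grounded att a.

Definition weakly_complete_labeling {F : Type} (att : F -> F -> Prop)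
  (L : F -> label) : Prop :=
  forall a,
    (L a = lin -> forall b, att b a -> L b <> lin) /\
    (L a = lout -> exists b, att b a /\ L b = lin) /\
    (L a = lundec -> (exists b, att b a /\ L b = lundec) /\
                     (forall b, att b a -> L b <> lin)).

Definition weakly_complete {F : Type} (att : F -> F -> Prop) (A : F -> Prop) : Prop :=
  exists L, weakly_complete_labeling att L /\ forall a, A a <-> L a = lin.

(* Main.v *)
Require Import Defs.

Theorem mainTheorem12 (F : Type) (att : F -> F -> Prop) (A : F -> Prop) :
  weakly_complete att A -> forall a, grounded att a -> A a.
Proof.
  intros [L [HL HA]].
  assert (K : forall a, grounded att a -> L a = lin).
  { fix IH 2. intros a Hg. destruct Hg as [a Ha].
    assert (Hb : forall b, att b a -> L b = lout).
    { intros b Hba. destruct (Ha b Hba) as [c [Gc Hcb]].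
      pose proof (IH c Gc) as Hc.
      destruct (L b) eqn:E; try reflexivity.
      - exfalso. exact (proj1 (HL b) E c Hcb Hc).
      - exfalso. exact (proj2 (proj2 (proj2 (HL b)) E) c Hcb Hc). }
    destruct (L a) eqn:E; try reflexivity.
    - destruct (proj1 (proj2 (HL a)) E) as [b [Hba Hl]].
      rewrite (Hb b Hba) in Hl; discriminate.
    - destruct (proj1 (proj2 (proj2 (HL a)) E)) as [b [Hba Hl]].
      rewrite (Hb b Hba) in Hl; discriminate. }
  intros a Hg. apply HA, K, Hg.
Qed.
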